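(* Let $\mathscr X=[0,1]^d$ with the Euclidean norm $\|\cdot\|_2$, and let $\beta\in(0,\infty)$. For $\mathbf x\in\mathscr X$ and a finite set $\mathbf X_n\subset\mathscr X$ define $D_\beta(\mathbf x,\mathbf X_n,\mathscr X)=\min\{\min_{\mathbf x_i\in\mathbf X_n}\|\mathbf x-\mathbf x_i\|_2,\ \beta\,d(\mathbf x,\partial\mathscr X)\}$, where $d(\mathbf x,\partial\mathscr X)$ is the Euclidean distance from $\mathbf x$ to the boundary of $\mathscr X$. Let $\mathbf x_1\in\mathscr X$ and, for $n\ge1$, let $\mathbf x_{n+1}\in\mathrm{Arg}\max_{\mathbf x\in\mathscr X}D_\beta(\mathbf x,\mathbf X_n,\mathscr X)$ where $\mathbf X_n=\{\mathbf x_1,\ldots,\mathbf x_n\}$. Then for every $n\ge1$, $$\min_{1\le i\le n}\|\mathbf x_{n+1}-\mathbf x_i\|_2\ge a\,\mathsf{CR}(\mathbf X_n),\qquad a=\frac1{1+\sqrt d/\beta};$$ that is, this boundary-phobic algorithm is an instance of the relaxed greedy packing algorithm (in which $\mathbf x_{n+1}\in\mathscr X$ is any point with $\min_i\|\mathbf x_{n+1}-\mathbf x_i\|\ge\alpha_n\mathsf{CR}(\mathbf X_n)$) with $\alpha_n=a=1/(1+\sqrt d/\beta)$ for all $n$.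
   Context: Fill distance $\mathsf{CR}(\mathbf X_n)=\sup_{\mathbf x\in\mathscr X}\min_{i\le n}\|\mathbf x-\mathbf x_i\|_2$. *)

(* Defs.v *)
From HB Require Import structures.
From mathcomp Require Import all_boot all_order all_algebra.
From mathcomp Require Import all_classical all_reals.
Set Implicit Arguments. Unset Strict Implicit. Unset Printing Implicit Defensive.
Import Order.TTheory GRing.Theory Num.Theory.
Local Open Scope classical_set_scope.
Local Open Scope ring_scope.

Section Defs.
Variables (R : realType) (d : nat).
Notation pt := ('I_d -> R).

Definition cube : set pt := [set x | forall i, 0 <= x i <= 1].

Definition cube_boundary : set pt :=
  [set x | cube x /\ exists i, x i = 0 \/ x i = 1].

Definition dist2 (x y : pt) : R := Num.sqrt (\sum_i (x i - y i) ^+ 2).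

Definition dist_boundary (x : pt) : R := inf [set dist2 x y | y in cube_boundary].

Definition min_dist (X : nat -> pt) (n : nat) (x : pt) : R :=
  inf [set r | exists i, (1 <= i <= n)%N /\ r = dist2 x (X i)].

Definition Dbeta (beta : R) (X : nat -> pt) (n : nat) (x : pt) : R :=
  Num.min (min_dist X n x) (beta * dist_boundary x).

Definition CR (X : nat -> pt) (n : nat) : R := sup [set min_dist X n y | y in cube].

End Defs.

(* Main.v *)
Require Import Defs.
From HB Require Import structures.
From mathcomp Require Import all_boot all_order all_algebra.
From mathcomp Require Import all_classical all_reals.
From mathcomp Require Import ring lra.
Import Order.TTheory GRing.Theory Num.Theory.
Local Open Scope classical_set_scope.
Local Open Scope ring_scope.

Lemma cs_ineq (R : realType) (d : nat) (a b : 'I_d -> R) :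
  \sum_i a i * b i <= Num.sqrt (\sum_i a i ^+ 2) * Num.sqrt (\sum_i b i ^+ 2).
Proof.
set A := Num.sqrt _; set B := Num.sqrt _.
have hA : 0 <= A := sqrtr_ge0 _. have hB : 0 <= B := sqrtr_ge0 _.
have sa : 0 <= \sum_i a i ^+ 2 by apply: sumr_ge0 => i _; exact: sqr_ge0.
have sb : 0 <= \sum_i b i ^+ 2 by apply: sumr_ge0 => i _; exact: sqr_ge0.
have [A0|Apos] := eqVneq A 0.
  have : \sum_i a i ^+ 2 = 0.
    apply/le_anti; rewrite sa andbT -sqrtr_eq0 -/A A0 //.
  move/psumr_eq0P => h; have {}h := h (fun i _ => sqr_ge0 _).
  rewrite A0 mul0r big1 // => i _.
  have : a i ^+ 2 = 0 by apply: h.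
  by move/eqP; rewrite sqrf_eq0 => /eqP ->; rewrite mul0r.
have [B0|Bpos] := eqVneq B 0.
  have : \sum_i b i ^+ 2 = 0.
    apply/le_anti; rewrite sb andbT -sqrtr_eq0 -/B B0 //.
  move/psumr_eq0P => h; have {}h := h (fun i _ => sqr_ge0 _).
  rewrite B0 mulr0 big1 // => i _.
  have : b i ^+ 2 = 0 by apply: h.
  by move/eqP; rewrite sqrf_eq0 => /eqP ->; rewrite mulr0.
have ABpos : 0 < A * B by rewrite mulr_gt0 // lt0r ?Apos ?Bpos.
have e : \sum_i (B * a i - A * b i) ^+ 2 =
   B ^+ 2 * \sum_i a i ^+ 2 + A ^+ 2 * \sum_i b i ^+ 2 - 2 * (A * B) * \sum_i a i * b i.
  rewrite !mulr_sumr -big_split -sumrB /=; apply: eq_bigr => i _; ring.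
have : 0 <= \sum_i (B * a i - A * b i) ^+ 2 by apply: sumr_ge0 => i _; exact: sqr_ge0.
rewrite e -[\sum_i a i ^+ 2](sqr_sqrtr sa) -[\sum_i b i ^+ 2](sqr_sqrtr sb) -/A -/B => h.
set S := \sum_i a i * b i in h *.
have : 0 <= (A * B) * (A * B - S).
  have -> : (A * B) * (A * B - S) = (B ^+ 2 * A ^+ 2 + A ^+ 2 * B ^+ 2 - 2 * (A * B) * S) / 2 by field.
  by rewrite divr_ge0.
by rewrite pmulr_rge0 // subr_ge0.
Qed.

Lemma dist2_ge0 (R : realType) (d : nat) (x y : 'I_d -> R) : 0 <= dist2 x y.
Proof. exact: sqrtr_ge0. Qed.

Lemma dist2C (R : realType) (d : nat) (x y : 'I_d -> R) : dist2 x y = dist2 y x.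
Proof. by rewrite /dist2; congr Num.sqrt; apply: eq_bigr => i _; rewrite -sqrrN opprB. Qed.

Lemma dist2_tri (R : realType) (d : nat) (x y z : 'I_d -> R) :
  dist2 x z <= dist2 x y + dist2 y z.
Proof.
rewrite /dist2.
set A := Num.sqrt (\sum_i (x i - y i) ^+ 2); set B := Num.sqrt (\sum_i (y i - z i) ^+ 2).
have sa : 0 <= \sum_i (x i - y i) ^+ 2 by apply: sumr_ge0 => i _; exact: sqr_ge0.
have sb : 0 <= \sum_i (y i - z i) ^+ 2 by apply: sumr_ge0 => i _; exact: sqr_ge0.
have hAB : 0 <= A + B by rewrite addr_ge0 // sqrtr_ge0.
rewrite -(ger0_norm hAB) -sqrtr_sqr ler_sqrt ?sqr_ge0 //.
have cs := cs_ineq _ _ (fun i => x i - y i) (fun i => y i - z i).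
have -> : \sum_i (x i - z i) ^+ 2 = \sum_i (x i - y i) ^+ 2 + \sum_i (y i - z i) ^+ 2
   + 2 * \sum_i (x i - y i) * (y i - z i).
  rewrite mulr_sumr -!big_split /=; apply: eq_bigr => i _; ring.
rewrite sqrrD -/A -/B -[\sum_i (x i - y i) ^+ 2](sqr_sqrtr sa) -[\sum_i (y i - z i) ^+ 2](sqr_sqrtr sb) -/A -/B.
move: cs => /=; rewrite -/A -/B => cs.
lra.
Qed.

Lemma dist2_coord (R : realType) (d : nat) (x y : 'I_d -> R) i :
  `|x i - y i| <= dist2 x y.
Proof.
rewrite /dist2 -sqrtr_sqr ler_sqrt; last by apply: sumr_ge0 => j _; exact: sqr_ge0.
rewrite (bigD1 i) //= lerDl; apply: sumr_ge0 => j _; exact: sqr_ge0.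
Qed.

Definition zfun (R : realType) (d : nat) (y : 'I_d -> R) (s : R) : 'I_d -> R :=
  fun i => y i + s * (2^-1 - y i).
Arguments zfun {R d}.

Lemma md_le (R : realType) (d : nat) (X : nat -> 'I_d -> R) n x i :
  (1 <= i <= n)%N -> min_dist X n x <= dist2 x (X i).
Proof.
move=> hi; apply: ge_inf; last by exists i.
by exists 0 => r [j [_ ->]]; exact: dist2_ge0.
Qed.

Lemma md_ge (R : realType) (d : nat) (X : nat -> 'I_d -> R) n x m :
  (1 <= n)%N -> (forall i, (1 <= i <= n)%N -> m <= dist2 x (X i)) -> m <= min_dist X n x.
Proof.
move=> hn h; apply: lb_le_inf; first by exists (dist2 x (X 1%N)); exists 1%N; rewrite leqnn hn.
by move=> r [j [hj ->]]; exact: h.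
Qed.

Lemma md_ge0 (R : realType) (d : nat) (X : nat -> 'I_d -> R) n x :
  (1 <= n)%N -> 0 <= min_dist X n x.
Proof. by move=> hn; apply: md_ge => // i _; exact: dist2_ge0. Qed.

Lemma md_lip (R : realType) (d : nat) (X : nat -> 'I_d -> R) n y z :
  (1 <= n)%N -> min_dist X n y - dist2 z y <= min_dist X n z.
Proof.
move=> hn; apply: md_ge => // i hi.
have h1 := @md_le _ _ X n y i hi.
have h2 := dist2_tri _ _ y z (X i).
rewrite [dist2 y z]dist2C in h2. lra.
Qed.

Lemma zfun_cube (R : realType) (d : nat) (y : 'I_d -> R) s :
  cube y -> 0 <= s <= 1 -> cube (zfun y s).
Proof.
move=> hy /andP[s0 s1] i; have /andP[y0 y1] := hy i; rewrite /zfun.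
apply/andP; split; nra.
Qed.

Lemma zfun_dist (R : realType) (d : nat) (y : 'I_d -> R) s :
  cube y -> 0 <= s <= 1 -> dist2 (zfun y s) y <= s * Num.sqrt d%:R / 2.
Proof.
move=> hy /andP[s0 s1].
have e : s * Num.sqrt d%:R / 2 = Num.sqrt ((s / 2) ^+ 2 * d%:R).
  rewrite sqrtrM ?sqr_ge0 // sqrtr_sqr ger0_norm; last by rewrite divr_ge0.
  by rewrite mulrAC.
rewrite e /dist2 ler_sqrt; last by rewrite mulr_ge0 ?sqr_ge0.
have -> : (s / 2) ^+ 2 * d%:R = \sum_(i < d) (s / 2) ^+ 2.
  by rewrite sumr_const card_ord mulr_natr.
apply: ler_sum => i _; rewrite /zfun.
have /andP[y0 y1] := hy i.
have -> : y i + s * (2^-1 - y i) - y i = s * (2^-1 - y i) by ring.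
rewrite exprMn [X in _ <= X]exprMn; apply: ler_wpM2l; first exact: sqr_ge0.
nra.
Qed.

Lemma db_le (R : realType) (d : nat) (x : 'I_d -> R) i :
  cube x -> dist_boundary x <= x i /\ dist_boundary x <= 1 - x i.
Proof.
move=> hx.
have lb : has_lbound [set dist2 x y | y in @cube_boundary R d].
  by exists 0 => r [y _ <-]; exact: dist2_ge0.
have /andP[x0 x1] := hx i.
have key : forall v : R, 0 <= v <= 1 -> `|x i - v| = dist2 x (fun j => if j == i then v else x j).
  move=> v hv; rewrite /dist2 (bigD1 i) //= eqxx big1 ?addr0 ?sqrtr_sqr //.
  by move=> j /negbTE ->; rewrite subrr expr0n.
split.
- have := ge_inf lb; apply.
  exists (fun j => if j == i then 0 else x j).
    split; last by exists i; left; rewrite eqxx.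
    by move=> j; case: ifP => _ //; rewrite lexx ler01.
  by rewrite -key ?lexx ?ler01 // subr0 ger0_norm.
- have := ge_inf lb; apply.
  exists (fun j => if j == i then 1 else x j).
    split; last by exists i; right; rewrite eqxx.
    by move=> j; case: ifP => _ //; rewrite lexx ler01.
  by rewrite -key ?lexx ?ler01 // distrC ger0_norm // subr_ge0.
Qed.

Lemma db_ge (R : realType) (d : nat) (hd : (0 < d)%N) (y : 'I_d -> R) s :
  cube y -> 0 <= s <= 1 -> s / 2 <= dist_boundary (zfun y s).
Proof.
move=> hy /andP[s0 s1]; apply: lb_le_inf.
  exists (dist2 (zfun y s) (fun _ => 0)); exists (fun _ => 0) => //.
  split; first by move=> j; rewrite lexx ler01.
  by exists (Ordinal hd); left.
move=> r [w [_ [i hi]] <-].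
apply: le_trans (dist2_coord _ _ _ _ i).
have /andP[y0 y1] := hy i; rewrite /zfun.
case: hi => ->.
- rewrite subr0 ger0_norm; nra.
- rewrite distrC ger0_norm; nra.
Qed.

Theorem theorem7 (R : realType) (d : nat) (hd : (0 < d)%N) (beta : R)
  (hbeta : 0 < beta) (x : nat -> 'I_d -> R)
  (hx1 : cube (x 1%N))
  (hstep : forall n : nat, (1 <= n)%N ->
     cube (x n.+1) /\
     (forall y : 'I_d -> R, cube y -> Dbeta beta x n y <= Dbeta beta x n (x n.+1))) :
  forall n : nat, (1 <= n)%N ->
    (1 + Num.sqrt (d%:R) / beta)^-1 * CR x n <= min_dist x n (x n.+1).
Proof.
move=> n hn.
have [cx' hmax] := hstep n hn.
set x' := x n.+1 in cx' hmax *.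
set S := Num.sqrt d%:R.
have S0 : 0 <= S := sqrtr_ge0 _.
have bS : 0 < beta + S by lra.
have ha : (1 + S / beta)^-1 = beta / (beta + S).
  by field; rewrite ?gt_eqF //; lra.
rewrite ha.
set M := min_dist x n x'.
have DM : Dbeta beta x n x' <= M by rewrite /Dbeta ge_min lexx.
have key : forall y, cube y -> beta / (beta + S) * min_dist x n y <= M.
  move=> y cy.
  set rho := min_dist x n y.
  have r0 : 0 <= rho := @md_ge0 _ _ x n y hn.
  set k := rho / (beta + S).
  have k0 : 0 <= k by rewrite divr_ge0 // ltW.
  have rk : rho = k * (beta + S) by rewrite /k divfK // gt_eqF.
  have -> : beta / (beta + S) * rho = beta * k by rewrite /k; field; rewrite gt_eqF.
  have [small|big] := lerP k (2^-1).
  - have s01 : 0 <= 2 * k <= 1 by apply/andP; split; lra.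
    have cz := @zfun_cube _ _ y _ cy s01.
    have h1 := @md_lip _ _ x n y (zfun y (2 * k)) hn.
    have h2 := @zfun_dist _ _ y _ cy s01.
    have h3 := @db_ge _ _ hd y _ cy s01.
    have := hmax _ cz.
    have : beta * k <= Dbeta beta x n (zfun y (2 * k)).
      rewrite /Dbeta le_min; apply/andP; split.
      + rewrite -/rho in h1.
        have e1 : 2 * k * S / 2 = k * S by field.
        have e2 : rho - k * S = beta * k by rewrite rk; ring.
        rewrite e1 in h2.
        apply: le_trans h1; rewrite -e2 lerD2l lerN2 //.
      + rewrite ler_pM2l //; lra.
    move=> a b; apply: le_trans DM; exact: le_trans a b.
  - have s01 : (0 : R) <= (1 : R) <= (1 : R) by rewrite ler01 lexx.
    have cz := @zfun_cube _ _ y _ cy s01.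
    have h1 := @md_lip _ _ x n y (zfun y 1) hn.
    have h2 := @zfun_dist _ _ y _ cy s01.
    have h3 := @db_ge _ _ hd y _ cy s01.
    rewrite -/rho mul1r in h1 h2.
    have p1 : beta / 2 <= k * beta by rewrite [k * beta]mulrC ler_pM2l // ltW.
    have p2 : S / 2 <= k * S by rewrite [k * S]mulrC ler_wpM2l // ltW.
    have hr : rho = k * beta + k * S by rewrite rk mulrDr.
    have hD : beta / 2 <= Dbeta beta x n (zfun y 1).
      rewrite /Dbeta le_min; apply/andP; split.
      + rewrite -/S in h2; lra.
      + rewrite ler_pM2l //; rewrite mul1r in h3; exact: h3.
    have hD' := le_trans hD (hmax _ cz).
    have hdb : beta / 2 <= beta * dist_boundary x'.
      by move: hD'; rewrite /Dbeta le_min => /andP[].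
    have hdb' : 2^-1 <= dist_boundary x'.
      by move: hdb; rewrite ler_pM2l.
    have ex : x' = zfun y 1.
      apply: funext => i; rewrite /zfun mul1r.
      have [d1 d2] := @db_le _ _ x' i cx'.
      have -> : y i + (2^-1 - y i) = 2^-1 by ring.
      lra.
    have h4 := @md_lip _ _ x n y x' hn.
    rewrite -/rho -/M ex in h4.
    rewrite -/S in h2; lra.
have hne : [set min_dist x n y | y in @cube R d] !=set0.
  by exists (min_dist x n (x 1%N)); exists (x 1%N).
have : CR x n <= M / (beta / (beta + S)).
  apply: ge_sup => // r [y cy <-].
  by rewrite ler_pdivlMr ?divr_gt0 // mulrC key.
by rewrite ler_pdivlMr ?divr_gt0 // mulrC.
Qed.
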